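(* Let $R$ be the holistic system robustness random variable (defined in the context), with distribution $\pi_R$, so that $\mathbb{P}_{\pi_R}[-R\le a]=1$. Let $\alpha\in(0,1]$ and define \[ L(x,\mu,t)=t\left(\mu+e^{\frac{x}{t}-\mu-\ln(\alpha)-1}\right),\qquad u_b(\mu,t)=L(a,\mu,t). \] For $N$ independent samples $r_1,\dots,r_N$ of $R$, let $\zeta^*_N(\mu,t)=\max_{1\le k\le N}L(-r_k,\mu,t)$. Then for all $\epsilon\in[0,1]$, \[ \mathbb{P}^N_{\pi_R}\left[r^*_E\triangleq\inf_{\mu\in\mathbb{R},\ t>0}\zeta^*_N(\mu,t)(1-\epsilon)+u_b(\mu,t)\epsilon\ \ge\ \mathrm{EVaR}_\alpha(-R)\right]\ge 1-(1-\epsilon)^N. \]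
   Context: System setting: $\dot x = f(x,u)+\xi$, $x\in\mathcal{X}\subset\mathbb{R}^n$, $u=U(x,\theta)\in\mathcal{U}\subset\mathbb{R}^m$, $\theta\in\Theta\subset\mathbb{R}^p$ a parameter fixed along a trajectory, and $\xi$ stochastic noise with unknown distribution $\pi_\xi(x,u,t)$. $x^\theta$ denotes the resulting closed-loop state signal in $\mathcal{S}=\{s:\mathbb{R}_{\ge0}\to\mathbb{R}^n\}$ from an initial condition $x_0\in\mathcal{X}_0\subseteq\mathcal{X}$. A robustness metric is a function $\rho:\mathcal{S}\to[-a,b]$ with $a,b>0$ such that $\rho(s)\ge0$ only for signals exhibiting desired properties. The holistic system robustness $R$ is the scalar random variable whose samples are $r=\rho(x^\theta)$, where $(x_0,\theta)$ is sampled uniformly from $\mathcal{X}_0\times\Theta$. Entropic-Value-at-Risk: $\mathrm{EVaR}_\alpha(Z)=\inf_{z>0}\frac1z\ln\left(\frac{\mathbb{E}[e^{zZ}]}{\alpha}\right)$. $\zeta^*_N(\mu,t)$ is the solution of $\min_\zeta\zeta$ s.t. $\zeta\ge L(-r_i,\mu,t)$ for all $i$; $\mathbb{P}^N_{\pi_R}$ is the $N$-fold product measure of the i.i.d. sample. *)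

(* Defs.v *)
From HB Require Import structures.
From mathcomp Require Import all_boot all_order all_algebra.
From mathcomp Require Import all_classical all_reals all_analysis.
Set Implicit Arguments. Unset Strict Implicit. Unset Printing Implicit Defensive.
Import Order.TTheory GRing.Theory Num.Theory.
Import numFieldNormedType.Exports.
Local Open Scope classical_set_scope.
Local Open Scope ring_scope.

Definition EVaR d (Omega : measurableType d) (R : realType)
  (P : probability Omega R) (alpha : R) (Z : Omega -> R) : \bar R :=
  ereal_inf [set ((z^-1 * ln (fine (\int[P]_w (expR (z * Z w))%:E) / alpha))%:E)%E
            | z in `]0, +oo[%classic].

Definition Lfun (R : realType) (alpha x mu t : R) : R :=
  t * (mu + expR (x / t - mu - ln alpha - 1)).

Definition ub (R : realType) (alpha a mu t : R) : R := Lfun alpha a mu t.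

(* zeta*_N(mu,t) = max_{1<=k<=N} L(-r_k, mu, t)  (computed in \bar R with
   bottom -oo; for N >= 1 this is the finite maximum) *)
Definition zeta_star (R : realType) (N : nat) (alpha : R) (r : 'I_N -> R)
  (mu t : R) : R :=
  fine (\big[Order.max/-oo%E]_(k < N) ((Lfun alpha (- r k) mu t)%:E))%E.

Definition rstarE (R : realType) (N : nat) (alpha a eps : R) (r : 'I_N -> R)
  : \bar R :=
  ereal_inf [set x | exists mu t : R, 0 < t /\
     x = (zeta_star alpha r mu t * (1 - eps) + ub alpha a mu t * eps)%:E].

(* mutual independence of a finite family of real random variables:
   the product rule for every family of Borel sets (taking A i = setT
   recovers every subfamily) *)
Definition mutually_independent d (Omega : measurableType d) (R : realType)
  (P : probability Omega R) (N : nat) (X : 'I_N -> Omega -> R) : Prop :=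
  forall A : 'I_N -> set R, (forall i, measurable (A i)) ->
    P (\bigcap_(i in [set: 'I_N]) (X i @^-1` A i)) =
    (\prod_(i < N) P (X i @^-1` A i))%E.

Definition same_law d (Omega : measurableType d) (R : realType)
  (P : probability Omega R) (X Y : Omega -> R) : Prop :=
  forall A : set R, measurable A -> P (X @^-1` A) = P (Y @^-1` A).

(* Main.v *)
Require Import Defs.
From HB Require Import structures.
From mathcomp Require Import all_boot all_order all_algebra.
From mathcomp Require Import all_classical all_reals all_analysis.
From mathcomp Require Import ring lra measurable_realfun.
Import Order.TTheory GRing.Theory Num.Theory.
Import numFieldNormedType.Exports.
Local Open Scope classical_set_scope.
Local Open Scope ring_scope.

Lemma Lfun_mono (R : realType) (alpha x y mu t : R) : 0 < t -> x <= y ->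
  Defs.Lfun alpha x mu t <= Defs.Lfun alpha y mu t.
Proof.
move=> t0 xy; rewrite /Defs.Lfun ler_wpM2l ?(ltW t0)// lerD2l ler_expR.
have : x / t <= y / t by rewrite ler_pM2r ?invr_gt0.
lra.
Qed.

Lemma real_core (R : realType) (alpha a eps p x mu t J : R) :
  0 < t -> 0 < alpha -> 0 < J -> 0 <= eps <= 1 -> -p <= x ->
  J <= (1 - eps) * expR (t^-1 * - p) + eps * expR (t^-1 * a) ->
  t * ln (J / alpha) <= Defs.Lfun alpha x mu t * (1 - eps) + ub alpha a mu t * eps.
Proof.
move=> t0 al0 J0 /andP[e0 e1] px HJ.
set K := expR (- mu - ln alpha - 1).
have hK z : expR (z / t - mu - ln alpha - 1) = expR (t^-1 * z) * K.
  by rewrite /K -expRD; congr expR; rewrite mulrC; ring.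
have K0 : 0 < K by apply: expR_gt0.
have hln : ln (J / alpha) <= mu + J * K.
  have := expR_ge1Dx (ln (J / alpha) - mu - 1).
  have -> : expR (ln (J / alpha) - mu - 1) = J * K.
    rewrite (_ : ln (J / alpha) - mu - 1 = ln J + (- mu - ln alpha - 1)).
      by rewrite expRD lnK // posrE.
    rewrite ln_div ?posrE //; ring.
  lra.
have hA : expR (t^-1 * - p) <= expR (t^-1 * x).
  by rewrite ler_expR ler_pM2l ?invr_gt0.
have h1 : J * K <= ((1 - eps) * expR (t^-1 * x) + eps * expR (t^-1 * a)) * K.
  rewrite ler_pM2r //; apply: (le_trans HJ); rewrite lerD2r ler_wpM2l //; lra.
rewrite /ub /Defs.Lfun !hK.
have h2 : t * ln (J / alpha) <= t * (mu + ((1 - eps) * expR (t^-1 * x) + eps * expR (t^-1 * a)) * K).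
  rewrite ler_pM2l //; lra.
apply: (le_trans h2); rewrite le_eqVlt; apply/orP; left; apply/eqP; ring.
Qed.

Section S.
Context (R : realType) (d : measure_display) (Omega : measurableType d)
  (P : probability Omega R) (Rob : {RV P >-> R}).
Local Open Scope ereal_scope.

Lemma mRob (A : set R) : measurable A -> measurable (Rob @^-1` A).
Proof. exact: measurable_funPTI. Qed.

Lemma mu_bigcup_le (F : (set Omega)^nat) (c : \bar R) :
  (forall n, measurable (F n)) ->
  (forall n m, (n <= m)%N -> F n `<=` F m) ->
  (forall n, P (F n) <= c) -> P (\bigcup_n F n) <= c.
Proof.
move=> mF ndF Fc.
apply: (cvge_to_le (nondecreasing_cvg_mu mF _ _)).
- exact: bigcupT_measurable.
- by move=> n m nm; apply/subsetPset; exact: ndF.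
- exact: nearW.
Qed.

Lemma ccdf_small (c : R) : (0 < c)%R -> exists x, P (Rob @^-1` `]x, +oo[) < c%:E.
Proof.
move=> c0.
have := cvg_ccdfy0 Rob.
move=> /(_ [set y | y < c%:E]) [].
  by apply: open_ereal_lt'; rewrite lte_fin.
move=> M [_ HM]; exists (M + 1)%R; apply: (HM (M + 1)%R).
by rewrite ltrDl.
Qed.


Lemma quantile (a eps : R) : (0 < eps)%R -> (eps < 1)%R ->
  P (Rob @^-1` `[(- a)%R, +oo[) = 1 ->
  exists p, [/\ (- a <= p)%R, P (Rob @^-1` `]p, +oo[) <= (1 - eps)%:E
             & P (Rob @^-1` `]-oo, p[) <= eps%:E].
Proof.
move=> e0 e1 hP.
pose S := [set x : R | P (Rob @^-1` `]x, +oo[) <= (1 - eps)%:E].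
have Slb : lbound S (- a)%R.
  move=> x Sx; rewrite leNgt; apply/negP => xa.
  have : P (Rob @^-1` `[(- a)%R, +oo[) <= P (Rob @^-1` `]x, +oo[).
    apply: le_measure; rewrite ?inE; [exact: mRob|exact: mRob|].
    by move=> w /=; rewrite !in_itv /= !andbT => /(lt_le_trans xa).
  rewrite hP => h; have := le_trans h Sx; rewrite lee_fin; lra.
have Sne : S !=set0.
  have h1 : (0 < 1 - eps)%R by lra.
  have [x hx] := ccdf_small (1 - eps)%R h1.
  by exists x; rewrite /S /=; apply: ltW.
have hlb : has_lbound S by exists (- a)%R.
have hinf : has_inf S by split.
exists (inf S); split.
- exact: lb_le_inf.
- have -> : Rob @^-1` `]inf S, +oo[ =
      \bigcup_n (Rob @^-1` `](inf S + n.+1%:R^-1)%R, +oo[).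
    apply/seteqP; split => w /=; rewrite ?in_itv /= ?andbT.
      move=> /ltr_add_invr [k hk]; exists k => //=; rewrite in_itv /= andbT //.
    by move=> [k _ /=]; rewrite in_itv /= andbT; apply: le_lt_trans; rewrite lerDl.
  apply: mu_bigcup_le.
  + by move=> n; exact: mRob.
  + move=> n m nm w /=; rewrite !in_itv /= !andbT; apply: le_lt_trans.
    by rewrite lerD2l lef_pV2 ?posrE // ler_nat.
  + move=> n; have hn : (0 < n.+1%:R^-1 :> R)%R by rewrite invr_gt0.
    have [s Ss hs] := inf_adherent hn hinf.
    apply: le_trans Ss; apply: le_measure; rewrite ?inE; [exact: mRob|exact: mRob|].
    by move=> w /=; rewrite !in_itv /= !andbT; apply: lt_trans.
- have -> : Rob @^-1` `]-oo, inf S[ =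
      \bigcup_n (Rob @^-1` `]-oo, (inf S - n.+1%:R^-1)%R]).
    apply/seteqP; split => w /=; rewrite ?in_itv /=.
      move=> /ltr_add_invr [k hk]; exists k => //=; rewrite in_itv /=.
      by rewrite lerBrDr ltW.
    move=> [k _ /=]; rewrite in_itv /= => /le_lt_trans; apply.
    by rewrite ltrBlDr ltrDl invr_gt0.
  apply: mu_bigcup_le.
  + by move=> n; exact: mRob.
  + move=> n m nm w /=; rewrite !in_itv /= => /le_trans; apply.
    by rewrite lerD2l lerN2 lef_pV2 ?posrE // ler_nat.
  + move=> n; set x := (inf S - n.+1%:R^-1)%R.
    have nSx : ~ S x.
      move=> Sx; have := ge_inf hlb Sx; rewrite /x.
      have : (0 < n.+1%:R^-1 :> R)%R by rewrite invr_gt0.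
      move=> h3 h4; clear Sx; clearbody x S; move: (n.+1%:R^-1)%R h3 h4 => k h3 h4; lra.
    have -> : Rob @^-1` `]-oo, x] = ~` (Rob @^-1` `]x, +oo[).
      apply/seteqP; split => w /=; rewrite !in_itv /= ?andbT.
        by move=> h1 h2; move: (le_lt_trans h1 h2); rewrite ltxx.
      by move/negP; rewrite -leNgt.
    rewrite probability_setC; last exact: mRob.
    have hfin : P (Rob @^-1` `]x, +oo[) \is a fin_num.
      by apply: fin_num_measure; exact: mRob.
    move: nSx; rewrite /S /= -(fineK hfin) -EFinB !lee_fin => /negP.
    rewrite -ltNge; lra.
Qed.


Lemma mexp (t : R) : measurable_fun [set: Omega] (fun w : Omega => (expR (t^-1 * - Rob w)%R)%:E).
Proof.
apply/measurable_EFinP; apply: measurableT_comp => //.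
apply: measurable_funM => //; apply: measurableT_comp => //.
Qed.

Lemma int_lb (t x0 : R) : (0 < t)%R ->
  (expR (t^-1 * - x0)%R)%:E * P (Rob @^-1` `]-oo, x0]) <=
  \int[P]_w (expR (t^-1 * - Rob w)%R)%:E.
Proof.
move=> t0; have mA : measurable (Rob @^-1` `]-oo, x0]) by exact: mRob.
have -> : P (Rob @^-1` `]-oo, x0]) =
    \int[P]_w (\1_(Rob @^-1` `]-oo, x0]) w)%:E by rewrite integral_indic // setIT.
rewrite -ge0_integralZl_EFin //; last first.
  by apply/measurable_EFinP; exact: measurable_indic.
apply: ge0_le_integral => //.
- apply: emeasurable_funM => //; apply/measurable_EFinP.
  exact: measurable_indic.
- exact: mexp.
move=> w _; rewrite lee_fin indicE; case: (boolP (w \in _)) => /=.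
  rewrite inE /= in_itv /= => hw; rewrite mulr1 ler_expR.
  by rewrite ler_pM2l ?invr_gt0 // lerN2.
by rewrite mulr0 expR_ge0.
Qed.


Lemma int_ub (a eps p t : R) : (0 < t)%R -> (- a <= p)%R ->
  P (Rob @^-1` `[(- a)%R, +oo[) = 1 ->
  P (Rob @^-1` `]-oo, p[) <= eps%:E ->
  \int[P]_w (expR (t^-1 * - Rob w)%R)%:E <=
  ((1 - eps) * expR (t^-1 * - p) + eps * expR (t^-1 * a))%:E.
Proof.
move=> t0 ap hP hA.
set A := Rob @^-1` `]-oo, p[.
have mA : measurable A by exact: mRob.
set e0 := expR (t^-1 * - p)%R; set e1 := expR (t^-1 * a)%R.
have de : (e0 <= e1)%R by rewrite ler_expR ler_pM2l ?invr_gt0 // lerNl.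
have mI : measurable_fun [set: Omega] (fun w => (\1_A w)%:E : \bar R).
  by apply/measurable_EFinP; exact: measurable_indic.
apply: (@le_trans _ _ (\int[P]_w ((e0%:E) + ((e1 - e0)%:E * (\1_A w)%:E)))).
  apply: ae_ge0_le_integral => //.
  - exact: mexp.
  - move=> w _; apply: adde_ge0; first by rewrite lee_fin expR_ge0.
    by apply: mule_ge0; rewrite lee_fin ?subr_ge0 // indicE.
  - by apply: emeasurable_funD => //; apply: emeasurable_funM.
  - exists (Rob @^-1` `]-oo, (- a)%R[); split.
    + exact: mRob.
    + have -> : Rob @^-1` `]-oo, (- a)%R[ = ~` (Rob @^-1` `[(- a)%R, +oo[).
        apply/seteqP; split => w /=; rewrite !in_itv /= ?andbT.
          by move=> h1 h2; move: (lt_le_trans h1 h2); rewrite ltxx.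
        by move/negP; rewrite -ltNge.
      have hm : measurable (Rob @^-1` `[(- a)%R, +oo[) by exact: mRob.
      have h := probability_setC P hm; rewrite hP subee // in h.
    + move=> w /= hw; rewrite in_itv /=; rewrite ltNge; apply/negP => haw.
      apply: hw => _; rewrite indicE; case: (boolP (w \in A)) => hwA.
        rewrite mule1 -EFinD lee_fin subrKC ler_expR ler_pM2l ?invr_gt0 //.
        by rewrite lerNl.
      rewrite mule0 adde0 lee_fin ler_expR ler_pM2l ?invr_gt0 // lerN2.
      move: hwA; rewrite notin_setE => h; rewrite leNgt; apply/negP => h2.
      by apply: h; rewrite /A /= in_itv /=.
rewrite ge0_integralD //; last first.
- by apply: emeasurable_funM.
- by move=> w _; apply: mule_ge0; rewrite lee_fin ?subr_ge0 // indicE.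
- by move=> w _; rewrite lee_fin expR_ge0.
have hT : P [set: Omega] = 1 by apply: probability_setT.
rewrite integral_cst // (_ : e0%:E * _ = e0%:E); last first.
  by rewrite -[RHS]mule1; congr (_ * _); exact: hT.
rewrite ge0_integralZl_EFin //; last by rewrite subr_ge0.
rewrite integral_indic // setIT.
have h1 : (e1 - e0)%:E * P A <= ((e1 - e0) * eps)%:E.
  by rewrite EFinM; apply: lee_wpmul2l; rewrite // lee_fin subr_ge0.
apply: le_trans (leeD2l _ h1) _.
rewrite -EFinD lee_fin; lra.
Qed.


Lemma pos_exists : exists x0, 0 < P (Rob @^-1` `]-oo, x0]).
Proof.
have [x hx] := ccdf_small 1%R ltr01.
exists x.
have -> : Rob @^-1` `]-oo, x] = ~` (Rob @^-1` `]x, +oo[).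
  apply/seteqP; split => w /=; rewrite !in_itv /= ?andbT.
    by move=> h1 h2; move: (le_lt_trans h1 h2); rewrite ltxx.
  by move/negP; rewrite -leNgt.
rewrite probability_setC; last exact: mRob.
have hfin : P (Rob @^-1` `]x, +oo[) \is a fin_num.
  by apply: fin_num_measure; exact: mRob.
move: hx; rewrite -(fineK hfin) -EFinB !lte_fin; lra.
Qed.

Lemma evar_le (alpha a eps p x mu t x0 : R) :
  (0 < t)%R -> (0 < alpha)%R -> (0 <= eps <= 1)%R -> (- a <= p)%R ->
  P (Rob @^-1` `[(- a)%R, +oo[) = 1 ->
  P (Rob @^-1` `]-oo, p[) <= eps%:E ->
  0 < P (Rob @^-1` `]-oo, x0]) -> (- p <= x)%R ->
  EVaR P alpha (fun w => (- Rob w)%R) <=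
  (Defs.Lfun alpha x mu t * (1 - eps) + ub alpha a mu t * eps)%:E.
Proof.
move=> t0 al0 e01 ap hP hA hx0 px.
apply: le_trans (ereal_inf_lbound _) _.
  exists t^-1%R; last reflexivity.
  by rewrite /= in_itv /= andbT invr_gt0.
rewrite lee_fin invrK /=.
set I := \int[P]_w _.
have hub : I <= ((1 - eps) * expR (t^-1 * - p) + eps * expR (t^-1 * a))%:E.
  exact: int_ub.
have hlb := int_lb t x0 t0.
have Ipos : 0 < I.
  apply: lt_le_trans hlb; apply: mule_gt0 => //.
  by rewrite lte_fin expR_gt0.
have Ifin : I \is a fin_num.
  by rewrite ge0_fin_numE ?ltW // (le_lt_trans hub) // ltry.
set J := fine I; have IJ : I = J%:E by rewrite /J fineK.
rewrite IJ lee_fin in hub; rewrite IJ lte_fin in Ipos.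
exact: (@real_core R alpha a eps p x mu t J t0 al0 Ipos e01 px hub).
Qed.

End S.

Definition Hfun {R : realType} (alpha a eps x : R) : \bar R :=
  ereal_inf [set y | exists mu t : R, 0 < t /\
     y = (Defs.Lfun alpha x mu t * (1 - eps) + ub alpha a mu t * eps)%:E].

Lemma Hfun_mono (R : realType) (alpha a eps x y : R) : eps <= 1 -> x <= y ->
  (Hfun alpha a eps x <= Hfun alpha a eps y)%E.
Proof.
move=> e1 xy; apply: le_ereal_inf_tmp => z [mu [t [t0 ->]]].
apply: (@le_trans _ _ (Defs.Lfun alpha x mu t * (1 - eps) + ub alpha a mu t * eps)%:E).
  by apply: ereal_inf_lbound; exists mu, t.
rewrite lee_fin lerD2r ler_wpM2r ?subr_ge0 //; exact: Lfun_mono.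
Qed.

Lemma rstar_eq (R : realType) (n : nat) (alpha a eps : R) (r : 'I_n.+1 -> R) :
  exists j, (forall k, - r k <= - r j) /\
    rstarE alpha a eps r = Hfun alpha a eps (- r j).
Proof.
have [j _ hj] := @Order.TotalTheory.eq_bigmax _ (\bar R) 'I_n.+1 -oo%E ord0 xpredT
  (fun k => (- r k)%:E) isT (fun i _ => leNye _).
have hk : forall k, - r k <= - r j.
  move=> k; rewrite -lee_fin -hj.
  exact: (le_bigmax -oo%E (fun k => (- r k)%:E) k).
have hz : forall mu t, 0 < t -> zeta_star alpha r mu t = Defs.Lfun alpha (- r j) mu t.
  move=> mu t t0; rewrite /zeta_star.
  have -> : (\big[Order.max/-oo%E]_(k < n.+1) (Defs.Lfun alpha (- r k) mu t)%:E =
      (Defs.Lfun alpha (- r j) mu t)%:E)%E.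
    apply/le_anti/andP; split.
      apply: bigmax_le => [|k _]; first exact: leNye.
      rewrite lee_fin; exact: Lfun_mono.
    exact: (le_bigmax _ (fun k => (Defs.Lfun alpha (- r k) mu t)%:E) j).
  by [].
exists j; split => //.
rewrite /rstarE /Hfun; congr ereal_inf; apply/seteqP; split => y [mu [t [t0 ->]]];
  exists mu, t; split => //; rewrite hz //.
Qed.

Theorem corollary6 (R : realType) (d : measure_display) (Omega : measurableType d)
  (P : probability Omega R) (Rob : {RV P >-> R}) (a alpha eps : R) (N : nat)
  (X : 'I_N -> {RV P >-> R}) :
  0 < a ->
  P [set w | - Rob w <= a] = 1%E ->
  0 < alpha <= 1 ->
  0 <= eps <= 1 ->
  (forall k, same_law P (X k) Rob) ->
  mutually_independent P (fun k => (X k : Omega -> R)) ->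
  ((1 - (1 - eps) ^+ N)%:E <=
   P [set w | (EVaR P alpha (fun w' => (- Rob w')%R) <=
               rstarE alpha a eps (fun k => X k w))%E])%E.
Proof.
move=> a0 hP0 /andP[al0 al1] /andP[e0 e1] hlaw hind.
have hP : P (Rob @^-1` `[(- a)%R, +oo[) = 1%E.
  rewrite -hP0; congr (P _); apply/seteqP; split => w /=;
    by rewrite in_itv /= andbT lerNl.
have [x0 hx0] := @pos_exists _ _ _ P Rob.
set c := EVaR P alpha (fun w' => (- Rob w')%R).
case: (eqVneq eps 0) => [-> | en0].
  by rewrite subr0 expr1n subrr; apply: measure_ge0.
case: (eqVneq eps 1) => [-> | en1].
  rewrite subrr; case: N X hlaw hind => [|n] X hlaw hind.
    by rewrite expr0 subrr; apply: measure_ge0.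
  rewrite expr0n /= subr0.
  have -> : [set w | (c <= rstarE alpha a 1 (fun k => X k w))%E] = setT.
    apply/seteqP; split => // w _ /=; apply: le_ereal_inf_tmp => y [mu [t [t0 ->]]].
    have h01 : (0 <= (1:R) <= 1) by rewrite ler01 lexx.
    have hA : (P (Rob @^-1` `]-oo, (- a)%R[) <= 1%:E)%E.
      by apply: probability_le1; exact: mRob.
    have hx : - - a <= a by rewrite opprK.
    have := @evar_le _ _ _ P Rob alpha a 1 (- a) a mu t x0 t0 al0 h01 (lexx _) hP hA hx0 hx.
    by rewrite subrr !mulr0 !add0r.
  by rewrite probability_setT.
have e0' : 0 < eps by rewrite lt_def en0 e0.
have e1' : eps < 1 by rewrite lt_def eq_sym en1 e1.
have [p [ap hG hA]] := @quantile _ _ _ P Rob a eps e0' e1' hP.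
case: N X hlaw hind => [|n] X hlaw hind.
  by rewrite expr0 subrr; apply: measure_ge0.
have e01 : 0 <= eps <= 1 by rewrite e0 e1.
have Hge : forall x, - p <= x -> (c <= Hfun alpha a eps x)%E.
  move=> x px; apply: le_ereal_inf_tmp => y [mu [t [t0 ->]]].
  exact: (@evar_le _ _ _ P Rob alpha a eps p x mu t x0 t0 al0 e01 ap hP hA hx0 px).
set G := [set w | _].
pose V := [set x : R | (c <= Hfun alpha a eps (- x))%E].
have mV : measurable V.
  apply: is_interval_measurable => x y Vx Vy z /andP[xz zy].
  rewrite /V /=; apply: le_trans Vy _; apply: Hfun_mono => //.
  by rewrite lerN2.
have mX : forall k (A : set R), measurable A -> measurable (X k @^-1` A).
  by move=> k A mA; exact: measurable_funPTI.
have GE : G = \bigcup_(k in [set: 'I_n.+1]) (X k @^-1` V).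
  apply/seteqP; split => w; rewrite /G /=.
    have [j [hj ->]] := @rstar_eq _ _ alpha a eps (fun k => X k w).
    by move=> h; exists j.
  move=> [k _ /=]; rewrite /V /= => hk.
  have [j [hj ->]] := @rstar_eq _ _ alpha a eps (fun k => X k w).
  by apply: le_trans hk _; apply: Hfun_mono => //; exact: hj.
have mG : measurable G.
  by rewrite GE; apply: fin_bigcup_measurable => // k _; exact: mX.
set C := \bigcap_(i in [set: 'I_n.+1]) (X i @^-1` `]p, +oo[).
have mC : measurable C.
  by apply: fin_bigcap_measurable => // k _; exact: mX.
have WG : ~` C `<=` G.
  move=> w hw; rewrite GE.
  case: (boolP [exists k, ~~ (p < X k w)]) => [/existsP [k hk]|].
    exists k => //; rewrite /V /=; apply: Hge; rewrite lerN2 leNgt; exact: hk.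
  rewrite negb_exists => /forallP hall; exfalso; apply: hw => k _ /=.
  by rewrite in_itv /= andbT; move: (hall k); rewrite negbK.
apply: (@le_trans _ _ (P (~` C))); last first.
  by apply: le_measure; rewrite ?inE //; exact: measurableC.
rewrite probability_setC //.
rewrite /C (hind (fun _ => `]p, +oo[%classic)); last by move=> _; exact: measurable_itv.
rewrite (eq_bigr (fun _ => P (Rob @^-1` `]p, +oo[))); last first.
  by move=> i _; apply: hlaw; exact: measurable_itv.
have hfin : P (Rob @^-1` `]p, +oo[) \is a fin_num.
  by apply: fin_num_measure; exact: mRob.
set g := fine (P (Rob @^-1` `]p, +oo[)).
have Pg : P (Rob @^-1` `]p, +oo[) = g%:E by rewrite /g fineK.
rewrite Pg prodEFin prodr_const card_ord -EFinB lee_fin lerD2l lerN2.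
have g0 : 0 <= g by rewrite /g fine_ge0 // measure_ge0.
have g1 : g <= 1 - eps by rewrite -lee_fin -Pg.
by apply: lerXn2r; rewrite ?nnegrE // subr_ge0.
Qed.
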